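(* Let $Y$ and $X_1,\ldots,X_m$ be real-valued square integrable random variables on a common probability space, write $\mathbf{X}=(X_1,\ldots,X_m)$, and fix $k\in\{1,\ldots,m\}$. Then $\iota_{X_k\mid X_j,\,j\neq k}(Y)=0$ if and only if $E(Y\mid \mathbf{X})=\theta_0+\sum_{j\neq k}\theta_j X_j$ (almost surely) for some real constants $\theta_0$ and $\theta_j$, $j\neq k$.
   Context: Define the set of distributional disturbances $$\mathcal{H}_k=\{\delta(\mathbf{X})\in L^2:\ \delta:\mathbb{R}^m\to\mathbb{R}\text{ measurable},\ E[\delta(\mathbf{X})]=0,\ E[\delta^2(\mathbf{X})]=1,\ E[X_j\delta(\mathbf{X})]=0\text{ for all } j\neq k\}$$ and the partial mean impact of $X_k$ on $Y$, $$\iota_{X_k\mid X_j,\,j\neq k}(Y)=\sup_{\delta(\mathbf{X})\in\mathcal{H}_k}E[Y\delta(\mathbf{X})].$$ *)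

(* Defs.v *)
From HB Require Import structures.
From mathcomp Require Import all_boot all_order all_algebra.
From mathcomp Require Import all_classical all_reals all_analysis.
Set Implicit Arguments. Unset Strict Implicit. Unset Printing Implicit Defensive.
Import Order.TTheory GRing.Theory Num.Theory.
Local Open Scope classical_set_scope.
Local Open Scope ring_scope.
Local Open Scope ereal_scope.

Section defs.
Context (R : realType) (d : measure_display) (T : measurableType d)
  (P : probability T R) (m : nat).

(* H_k : delta(X) with delta : R^m -> R measurable, E[delta(X)] = 0,
   E[delta(X)^2] = 1, E[X_j delta(X)] = 0 for all j <> k.
   (Integrability conditions make the expectations meaningful; they are
   implied by square integrability.) *)
Definition in_Hk (X : T -> m.-tuple R) (k : 'I_m) (delta : m.-tuple R -> R)
  : Prop :=
  [/\ measurable_fun [set: m.-tuple R] delta,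
      P.-integrable [set: T] (fun x => (delta (X x))%:E),
      \int[P]_x (delta (X x))%:E = 0,
      \int[P]_x ((delta (X x)) ^+ 2)%:E = 1
    & forall j : 'I_m, j != k ->
        P.-integrable [set: T] (fun x => (tnth (X x) j * delta (X x))%:E) /\
        \int[P]_x (tnth (X x) j * delta (X x))%:E = 0].

(* partial mean impact iota_{X_k | X_j, j<>k}(Y) = sup_{delta in H_k} E[Y delta(X)],
   with the convention sup of the empty family = 0 *)
Definition partial_mean_impact (Y : T -> R) (X : T -> m.-tuple R) (k : 'I_m)
  : \bar R :=
  if `[< exists delta, in_Hk X k delta >] then
    ereal_sup [set \int[P]_x (Y x * delta (X x))%:E | delta in in_Hk X k]
  else 0.

Definition sigmaX_measurable (X : T -> m.-tuple R) (Z : T -> R) : Prop :=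
  forall B : set R, measurable B ->
    exists A : set (m.-tuple R), measurable A /\ Z @^-1` B = X @^-1` A.

Definition is_cond_exp (Y : T -> R) (X : T -> m.-tuple R) (Z : T -> R) : Prop :=
  [/\ sigmaX_measurable X Z,
      P.-integrable [set: T] (fun x => (Z x)%:E)
    & forall A : set (m.-tuple R), measurable A ->
        \int[P]_(x in X @^-1` A) (Y x)%:E = \int[P]_(x in X @^-1` A) (Z x)%:E].

End defs.

(* Main.v *)
Require Import Defs.
From HB Require Import structures.
From mathcomp Require Import all_boot all_order all_algebra.
From mathcomp Require Import all_classical all_reals all_analysis.
From mathcomp Require Import measurable_realfun ring lra.
Import Order.TTheory GRing.Theory Num.Theory.
Local Open Scope classical_set_scope.
Local Open Scope ring_scope.

Section L2.
Context (R : realType) (d : measure_display) (T : measurableType d)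
  (P : probability T R).

Definition L2 (f : T -> R) := measurable_fun [set: T] f /\
  P.-integrable [set: T] (fun x => (f x ^+ 2)%:E).

Definition ip (f g : T -> R) : R := fine (\int[P]_x (f x * g x)%:E).

Lemma L2_mul f g : L2 f -> L2 g ->
  P.-integrable [set: T] (fun x => (f x * g x)%:E).
Proof.
move=> [mf If] [mg Ig].
apply: (@le_integrable _ _ _ _ _ measurableT _
   (fun x => (f x ^+ 2)%:E + (g x ^+ 2)%:E)%E).
- by apply/measurable_EFinP; exact: measurable_funM.
- move=> x _; rewrite -EFinD !abse_EFin lee_fin normrM.
  rewrite (@ger0_norm _ (_ + _)) ?addr_ge0 ?sqr_ge0 //.
  rewrite -(real_normK (num_real (f x))) -(real_normK (num_real (g x))).
  have := sqr_ge0 (`|f x| - `|g x|); have := normr_ge0 (f x);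
    have := normr_ge0 (g x); nra.
- exact: integrableD.
Qed.
Arguments L2_mul {f g}.


Lemma L2_cst c : L2 (fun=> c).
Proof.
split; first exact: measurable_cst.
exact: (finite_measure_integrable_cst P (c ^+ 2) measurableT).
Qed.

Lemma L2D f g : L2 f -> L2 g -> L2 (fun x => f x + g x).
Proof.
move=> Lf Lg; have [mf If] := Lf; have [mg Ig] := Lg.
split; first exact: measurable_funD.
have Ifg := L2_mul Lf Lg.
rewrite (_ : (fun x => _) = (fun x => (f x ^+ 2)%:E + (2%:E * (f x * g x)%:E + (g x ^+ 2)%:E)))%E; last first.
  by apply/funext => x; rewrite -EFinM -!EFinD sqrrD; congr (_%:E); ring.
apply: integrableD => //; apply: integrableD => //.
exact: integrableZl.
Qed.
Arguments L2D {f g}.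


Lemma L2Z a f : L2 f -> L2 (fun x => a * f x).
Proof.
move=> [mf If]; split; first exact: measurable_funM (measurable_cst _) mf.
rewrite (_ : (fun x => _) = (fun x => (a ^+ 2)%:E * (f x ^+ 2)%:E))%E; last first.
  by apply/funext => x; rewrite -EFinM exprMn.
exact: integrableZl.
Qed.
Arguments L2Z a {f}.


Lemma L2N f : L2 f -> L2 (fun x => - f x).
Proof.
move=> Lf; rewrite (_ : (fun x => _) = (fun x => (-1) * f x)); last first.
  by apply/funext => x; rewrite mulN1r.
exact: L2Z.
Qed.
Arguments L2N {f}.


Lemma L2B f g : L2 f -> L2 g -> L2 (fun x => f x - g x).
Proof. by move=> Lf Lg; apply: L2D => //; exact: L2N. Qed.
Arguments L2B {f g}.


Lemma L2_sum (I : Type) (s : seq I) (F : I -> T -> R) :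
  (forall i, L2 (F i)) -> L2 (fun x => \sum_(i <- s) F i x).
Proof.
move=> LF; elim: s => [|i s IH].
  rewrite (_ : (fun x => _) = (fun=> 0)); first exact: L2_cst.
  by apply/funext => x; rewrite big_nil.
rewrite (_ : (fun x => _) = (fun x => F i x + \sum_(j <- s) F j x)).
  exact: L2D.
by apply/funext => x; rewrite big_cons.
Qed.

Lemma ipE f g : L2 f -> L2 g -> (\int[P]_x (f x * g x)%:E)%E = (ip f g)%:E.
Proof.
by move=> Lf Lg; rewrite /ip fineK // integrable_fin_num // L2_mul.
Qed.
Arguments ipE {f g}.


Lemma ipC f g : ip f g = ip g f.
Proof. by rewrite /ip; congr fine; apply: eq_integral => x _; rewrite mulrC. Qed.

Lemma ipDl f g h : L2 f -> L2 g -> L2 h ->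
  ip (fun x => f x + g x) h = ip f h + ip g h.
Proof.
move=> Lf Lg Lh; rewrite /ip.
rewrite (_ : (fun x => _) = (fun x => (f x * h x)%:E + (g x * h x)%:E))%E; last first.
  by apply/funext => x; rewrite -EFinD mulrDl.
by rewrite integralD // ?L2_mul // fineD // integrable_fin_num // L2_mul.
Qed.

Lemma ipZl a f h : L2 f -> L2 h -> ip (fun x => a * f x) h = a * ip f h.
Proof.
move=> Lf Lh; rewrite /ip.
rewrite (_ : (fun x => _) = (fun x => a%:E * (f x * h x)%:E))%E; last first.
  by apply/funext => x; rewrite -EFinM mulrA.
rewrite integralZl //; last exact: L2_mul.
by rewrite (ipE Lf Lh).
Qed.

Lemma ipNl f h : L2 f -> L2 h -> ip (fun x => - f x) h = - ip f h.
Proof.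
move=> Lf Lh; rewrite (_ : (fun x => _) = (fun x => (-1) * f x)); last first.
  by apply/funext => x; rewrite mulN1r.
by rewrite ipZl // mulN1r.
Qed.

Lemma ipBl f g h : L2 f -> L2 g -> L2 h ->
  ip (fun x => f x - g x) h = ip f h - ip g h.
Proof. by move=> Lf Lg Lh; rewrite ipDl ?ipNl //; exact: L2N. Qed.

Lemma ip_suml (I : Type) (s : seq I) (F : I -> T -> R) h :
  (forall i, L2 (F i)) -> L2 h ->
  ip (fun x => \sum_(i <- s) F i x) h = \sum_(i <- s) ip (F i) h.
Proof.
move=> LF Lh; elim: s => [|i s IH].
  rewrite big_nil (_ : (fun x => _) = (fun x => 0 * 0)).
    by rewrite /ip; under eq_integral do rewrite mulr0 mul0r; rewrite integral0.
  by apply/funext => x; rewrite big_nil mulr0.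
rewrite (_ : (fun x => _) = (fun x => F i x + \sum_(j <- s) F j x)).
  by rewrite ipDl ?big_cons ?IH //; exact: L2_sum.
by apply/funext => x; rewrite big_cons.
Qed.

Lemma ip_cst c h : L2 h -> ip (fun=> c) h = c * ip (fun=> 1) h.
Proof.
move=> Lh; rewrite -ipZl //; last exact: L2_cst.
by congr ip; apply/funext => x; rewrite mulr1.
Qed.

Lemma ip11 : ip (fun=> 1) (fun=> 1) = 1.
Proof.
rewrite /ip; under eq_integral do rewrite mulr1.
rewrite (_ : (fun x => _) = cst 1%:E) //.
rewrite integral_cst // mul1e.
apply: (@eq_trans _ _ (fine 1%E)) => //; congr fine; exact: probability_setT.
Qed.

Lemma ip_ge0 f : 0 <= ip f f.
Proof.
rewrite /ip; apply: fine_ge0; apply: integral_ge0 => x _.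
by rewrite lee_fin -expr2 sqr_ge0.
Qed.

Lemma ip_disc f g : L2 f -> L2 g -> ip g g = 0 -> ip f g = 0.
Proof.
move=> Lf Lg gg0.
have key t : 0 <= ip f f + 2 * t * ip f g.
  have LtG := L2Z t Lg.
  have H := ip_ge0 (fun x => f x + t * g x).
  have LF := L2D Lf LtG.
  rewrite ipDl // (ipC f) (ipC (fun x => t * g x)) ipDl // ipDl // in H.
  rewrite (ipC f (fun x => t * g x)) !ipZl // (ipC g (fun x => t * g x)) ipZl // in H.
  rewrite gg0 (ipC g f) in H.
  move: H; set a := ip f f; set b := ip f g; nra.
apply/eqP/negPn/negP => fg0.
have := key (- (ip f f + 1) / (2 * ip f g)).
set a := ip f f; set b := ip f g.
have -> : a + 2 * (- (a + 1) / (2 * b)) * b = -1.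
  field; by rewrite fg0.
by rewrite ler0N1.
Qed.

Section GS.
Context (m : nat) (F : 'I_m -> T -> R)
  (LF : forall i, L2 (F i)).

Definition lc (c0 : R) (c : 'I_m -> R) (s : seq 'I_m) (x : T) :=
  c0 + \sum_(i <- s) c i * F i x.

Lemma lc_L2 c0 c s : L2 (lc c0 c s).
Proof.
apply: L2D; first exact: L2_cst.
apply: (@L2_sum _ s (fun i x => c i * F i x)) => i; exact: L2Z.
Qed.

Lemma ip_lc r c0 c s : L2 r -> ip r (fun=> 1) = 0 ->
  (forall i, i \in s -> ip r (F i) = 0) -> ip r (lc c0 c s) = 0.
Proof.
move=> Lr r1 rF; rewrite ipC /lc ipDl //; last 2 first.
- exact: L2_cst.
- apply: (@L2_sum _ s (fun i x => c i * F i x)) => i; exact: L2Z.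
rewrite ip_cst // ipC r1 mulr0 add0r.
rewrite (@ip_suml _ s (fun i x => c i * F i x)) //; last by move=> i; exact: L2Z.
rewrite big_seq big1 // => i si.
by rewrite ipZl // ipC rF // mulr0.
Qed.

Lemma GS (s : seq 'I_m) : uniq s -> forall h, L2 h -> exists c0 c,
  ip (fun x => h x - lc c0 c s x) (fun=> 1) = 0 /\
  forall i, i \in s -> ip (fun x => h x - lc c0 c s x) (F i) = 0.
Proof.
elim: s => [|j s IH] /=.
  move=> _ h Lh; exists (ip h (fun=> 1)), (fun=> 0); split => //.
  rewrite (_ : (fun x => _) = (fun x => h x - (fun=> ip h (fun=> 1)) x)); last first.
    by apply/funext => x; rewrite /lc big_nil addr0.
  rewrite ipBl //; try exact: L2_cst.
  by rewrite ip_cst ?ip11 ?mulr1 ?subrr //; exact: L2_cst.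
move=> /andP[js us] h Lh.
have [c0 [c [H1 H2]]] := IH us h Lh.
have [d0 [dd [K1 K2]]] := IH us (F j) (LF j).
set rh := (fun x => h x - lc c0 c s x) in H1 H2.
set rb := (fun x => F j x - lc d0 dd s x) in K1 K2.
have Lrh : L2 rh by apply: L2B => //; exact: lc_L2.
have Lrb : L2 rb by apply: L2B => //; exact: lc_L2.
set a := ip rh rb / ip rb rb.
exists (c0 - a * d0), (fun i => if i == j then a else c i - a * dd i).
have E : (fun x => h x - lc (c0 - a * d0)
    (fun i => if i == j then a else c i - a * dd i) (j :: s) x) =
    (fun x => rh x - a * rb x).
  apply/funext => x; rewrite /rh /rb /lc big_cons eqxx.
  rewrite (@eq_big_seq _ _ _ _ s _ (fun i => (c i - a * dd i) * F i x)); last first.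
    move=> i si; case: ifPn => // /eqP ij.
    by move: js; rewrite -ij si.
  have -> : \sum_(i <- s) (c i - a * dd i) * F i x =
      \sum_(i <- s) c i * F i x - a * \sum_(i <- s) dd i * F i x.
    rewrite mulr_sumr -sumrB; apply: eq_bigr => i _; ring.
  ring.
rewrite E.
have LaB : L2 (fun x => a * rb x) by exact: L2Z.
have orth1 : ip (fun x => rh x - a * rb x) (fun=> 1) = 0.
  by rewrite ipBl // ?ipZl ?H1 ?K1 ?mulr0 ?subrr //; exact: L2_cst.
have orths i : i \in s -> ip (fun x => rh x - a * rb x) (F i) = 0.
  by move=> si; rewrite ipBl // ?ipZl ?H2 ?K2 ?mulr0 ?subrr.
split => // i; rewrite in_cons => /orP[/eqP ->|si]; last exact: orths.
have Lr : L2 (fun x => rh x - a * rb x) by exact: L2B.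
rewrite (_ : F j = fun x => rb x + lc d0 dd s x); last first.
  by apply/funext => x; rewrite /rb subrK.
rewrite ipC ipDl //; last exact: lc_L2.
rewrite [ip (lc _ _ _) _]ipC ip_lc // addr0 ipC ipBl // ipZl //.
have [rb0|rbn0] := eqVneq (ip rb rb) 0.
  by rewrite rb0 mulr0 subr0 (ip_disc rh rb Lrh Lrb rb0).
by rewrite /a mulfVK // subrr.
Qed.

End GS.
Lemma mmax0 d0 (V : measurableType d0) (f : V -> R) :
  measurable_fun [set: V] f -> measurable_fun [set: V] (fun x => Num.max (f x) 0).
Proof. by move=> mf; exact: (measurable_maxr mf (measurable_cst (0:R))). Qed.

Lemma L2_int f : L2 f -> P.-integrable [set: T] (fun x => (f x)%:E).
Proof.
move=> Lf; have := L2_mul Lf (L2_cst 1).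
by rewrite (_ : (fun x => _) = (fun x => (f x)%:E))//; apply/funext => x; rewrite mulr1.
Qed.

Lemma L2_max0 f : L2 f -> L2 (fun x => Num.max (f x) 0).
Proof.
move=> [mf If]; split.
  exact: mmax0.
apply: (@le_integrable _ _ _ _ _ measurableT _ (fun x => (f x ^+ 2)%:E)) => //.
  apply/measurable_EFinP; apply: measurable_funX.
  exact: mmax0.
move=> x _; rewrite !abse_EFin lee_fin !ger0_norm ?sqr_ge0 //.
case: (lerP 0 (f x)) => h //.
by rewrite expr0n /= sqr_ge0.
Qed.

Lemma max0_split (a : R) : Num.max a 0 - Num.max (- a) 0 = a.
Proof.
case: (lerP 0 a) => h.
  have -> : Num.max (-a) 0 = 0 by rewrite max_r // oppr_le0.
  by rewrite subr0.
have -> : Num.max (-a) 0 = -a by rewrite max_l // oppr_ge0 ltW.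
by rewrite sub0r opprK.
Qed.

Section tower.
Context (d' : measure_display) (U : measurableType d') (X : T -> U)
  (mX : measurable_fun [set: T] X).
Import HBNNSimple.

Lemma int_preimage (w : T -> R) (B : set U) :
  (\int[P]_x (w x * \1_B (X x))%:E)%E = (\int[P]_(x in X @^-1` B) (w x)%:E)%E.
Proof.
rewrite [RHS]integral_mkcond; apply: eq_integral => x _.
rewrite patchE indicE.
have -> : (X x \in B) = (x \in X @^-1` B) by [].
by case: ifPn => _; rewrite ?mulr1 ?mulr0.
Qed.

Lemma simple_int (w : T -> R) (h : {nnsfun U >-> R}) :
  measurable_fun [set: T] w -> (forall x, 0 <= w x) ->
  (\int[P]_x (w x * h (X x))%:E)%E =
  (\sum_(y \in range h)
     (y%:E * \int[P]_(x in X @^-1` (h @^-1` [set y])) (w x)%:E))%E.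
Proof.
move=> mw w0.
transitivity (\int[P]_x (\sum_(y \in range h)
    (w x * (y * \1_(h @^-1` [set y]) (X x)))%:E))%E.
  apply: eq_integral => x _; rewrite fsumEFin; last exact: fimfunP.
  by rewrite -mulr_fsumr -fimfunE.
rewrite ge0_integral_fsum //; last 2 first.
- move=> y; apply/measurable_EFinP; apply: measurable_funM => //.
  apply: measurable_funM; first exact: measurable_cst.
  apply: measurableT_comp => //; apply: measurable_indic.
- move=> y x _; rewrite lee_fin mulr_ge0 //.
  by have := nnfun_muleindic_ge0 h y (X x); rewrite -EFinM lee_fin.
apply: eq_fsbigr => y; rewrite inE => -[t _ <-].
rewrite -int_preimage -ge0_integralZl_EFin //.
- by apply: eq_integral => x _; rewrite -EFinM; congr EFin; ring.
- by move=> x _; rewrite lee_fin mulr_ge0 // indicE.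
- apply/measurable_EFinP; apply: measurable_funM => //.
  exact: measurableT_comp.
Qed.

Lemma tower_ge0 (w1 w2 : T -> R) (G : U -> R) :
  measurable_fun [set: T] w1 -> measurable_fun [set: T] w2 ->
  (forall x, 0 <= w1 x) -> (forall x, 0 <= w2 x) ->
  (forall A, measurable A ->
    (\int[P]_(x in X @^-1` A) (w1 x)%:E)%E = (\int[P]_(x in X @^-1` A) (w2 x)%:E)%E) ->
  measurable_fun [set: U] G -> (forall t, 0 <= G t) ->
  (\int[P]_x (w1 x * G (X x))%:E)%E = (\int[P]_x (w2 x * G (X x))%:E)%E.
Proof.
move=> mw1 mw2 w10 w20 hA mG G0.
have mG' : measurable_fun [set: U] (EFin \o G) by exact/measurable_EFinP.
pose h_ := nnsfun_approx measurableT mG'.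
have S2 (w : T -> R) : measurable_fun [set: T] w -> (forall x, 0 <= w x) ->
    (\int[P]_x (w x * G (X x))%:E)%E =
    limn (fun n => \int[P]_x (w x * h_ n (X x))%:E)%E.
  move=> mw w0.
  transitivity (\int[P]_x limn (fun n => (w x * h_ n (X x))%:E))%E.
    apply: eq_integral => x _; apply/esym/cvg_lim => //.
    have wfin : (w x)%:E \is a fin_num by [].
    have H := cvgeZl wfin (cvg_nnsfun_approx measurableT mG' (fun t _ => G0 t) (I : setT (X x))).
    rewrite /= -EFinM in H.
    apply: cvg_trans H; apply: near_eq_cvg; apply: nearW => n.
    by rewrite /= EFinM.
  apply: monotone_convergence => //.
  - move=> n; apply/measurable_EFinP; apply: measurable_funM => //.
    apply: measurableT_comp => //; exact: measurable_funPT.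
  - by move=> n x _; rewrite lee_fin mulr_ge0.
  - move=> x _ a b ab; rewrite lee_fin ler_wpM2l //.
    exact/lefP/nd_nnsfun_approx.
rewrite (S2 w1) // (S2 w2) //; congr (limn _); apply/funext => n.
rewrite !simple_int //; apply: eq_fsbigr => y _; rewrite hA //.
Qed.

Lemma tower (W : T -> R) (g : U -> R) : L2 W -> measurable_fun [set: U] g ->
  L2 (fun x => g (X x)) ->
  (forall A, measurable A -> (\int[P]_(x in X @^-1` A) (W x)%:E)%E = 0%E) ->
  ip W (fun x => g (X x)) = 0.
Proof.
move=> LW mg LgX hA.
pose Wp x := Num.max (W x) 0; pose Wn x := Num.max (- W x) 0.
pose gp t := Num.max (g t) 0; pose gn t := Num.max (- g t) 0.
have LWp : L2 Wp by exact: L2_max0.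
have LWn : L2 Wn by apply: L2_max0; exact: L2N.
have LgpX : L2 (fun x => gp (X x)) by exact: (L2_max0 _ LgX).
have LgnX : L2 (fun x => gn (X x)) by apply: (L2_max0 _ (L2N LgX)).
have mgp : measurable_fun [set: U] gp by exact: mmax0.
have mgn : measurable_fun [set: U] gn.
  apply: mmax0; exact: measurable_funN.
have [mWp _] := LWp; have [mWn _] := LWn.
have hpn : forall A, measurable A ->
    (\int[P]_(x in X @^-1` A) (Wp x)%:E)%E = (\int[P]_(x in X @^-1` A) (Wn x)%:E)%E.
  move=> A mA.
  have mD : measurable (X @^-1` A) by rewrite -[X in measurable X]setTI; exact: mX.
  have ip1 : P.-integrable (X @^-1` A) (fun x => (Wp x)%:E).
    apply: (integrableS measurableT mD (subsetT _)); exact: L2_int.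
  have ip2 : P.-integrable (X @^-1` A) (fun x => (Wn x)%:E).
    apply: (integrableS measurableT mD (subsetT _)); exact: L2_int.
  have := hA A mA.
  rewrite (_ : (fun x => (W x)%:E) = (fun x => (Wp x)%:E - (Wn x)%:E)%E); last first.
    by apply/funext => x; rewrite -EFinB max0_split.
  rewrite integralB //.
  move: (integrable_fin_num mD ip1) (integrable_fin_num mD ip2).
  move: (\int[P]_(x in _) _)%E (\int[P]_(x in _) _)%E => a b.
  case: a => // a; case: b => // b _ _ /= /eqP; rewrite -EFinB eqe subr_eq0.
  by move=> /eqP ->.
have eW : W = (fun x => Wp x - Wn x).
  by apply/funext => x; rewrite max0_split.
have eg : (fun x => g (X x)) = (fun x => gp (X x) - gn (X x)).
  by apply/funext => x; rewrite /gp /gn max0_split.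
have e1 : ip Wp (fun x => gp (X x)) = ip Wn (fun x => gp (X x)).
  by rewrite /ip; congr fine; apply: tower_ge0 => // t; rewrite /gp le_max lexx orbT.
have e2 : ip Wp (fun x => gn (X x)) = ip Wn (fun x => gn (X x)).
  by rewrite /ip; congr fine; apply: tower_ge0 => // t; rewrite /gn le_max lexx orbT.
have LgpgnX : L2 (fun x => gp (X x) - gn (X x)) by exact: L2B.
rewrite eW eg ipBl // (ipC Wp) (ipC Wn) !ipBl // !(ipC (fun x => gp (X x))) !(ipC (fun x => gn (X x))).
by rewrite e1 e2; ring.
Qed.

End tower.
Section main.
Context (m : nat) (X : T -> m.-tuple R) (k : 'I_m)
  (mX : measurable_fun [set: T] X).

Let Xj (i : 'I_m) := fun x => tnth (X x) i.
Let s := [seq j <- index_enum 'I_m | j != k].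

Lemma s_uniq : uniq s.
Proof. by rewrite filter_uniq // index_enum_uniq. Qed.

Lemma mem_s i : (i \in s) = (i != k).
Proof. by rewrite mem_filter mem_index_enum andbT. Qed.

Lemma sumE (f : 'I_m -> R) : \sum_(i <- s) f i = \sum_(j < m | j != k) f j.
Proof. by rewrite big_filter. Qed.

Hypothesis LX : forall i, L2 (Xj i).

Lemma Hk_to (delta : m.-tuple R -> R) : in_Hk P X k delta ->
  [/\ measurable_fun [set: m.-tuple R] delta, L2 (fun x => delta (X x)),
      ip (fun x => delta (X x)) (fun=> 1) = 0,
      ip (fun x => delta (X x)) (fun x => delta (X x)) = 1 &
      forall j, j != k -> ip (Xj j) (fun x => delta (X x)) = 0].
Proof.
case=> mdel idel e0 e1 hj.
have mdX : measurable_fun [set: T] (fun x => delta (X x)).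
  exact: measurableT_comp mdel mX.
have LdX : L2 (fun x => delta (X x)).
  split => //; apply/integrableP; split.
    by apply/measurable_EFinP; exact: measurable_funX.
  under eq_integral do rewrite abse_EFin ger0_norm ?sqr_ge0 //.
  by rewrite e1 ltry.
split => //.
- by rewrite /ip; under eq_integral do rewrite mulr1; rewrite e0.
- by rewrite /ip; under eq_integral do rewrite -expr2; rewrite e1.
- by move=> j jk; rewrite /ip /Xj; have [_ ->] := hj j jk.
Qed.

Lemma Hk_of (delta : m.-tuple R -> R) :
  measurable_fun [set: m.-tuple R] delta -> L2 (fun x => delta (X x)) ->
  ip (fun x => delta (X x)) (fun=> 1) = 0 ->
  ip (fun x => delta (X x)) (fun x => delta (X x)) = 1 ->
  (forall j, j != k -> ip (Xj j) (fun x => delta (X x)) = 0) ->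
  in_Hk P X k delta.
Proof.
move=> mdel LdX e0 e1 hj; split => //.
- exact: L2_int.
- rewrite (_ : (fun x => _) = (fun x => (delta (X x) * 1)%:E)); last first.
    by apply/funext => x; rewrite mulr1.
  by rewrite (ipE LdX (L2_cst 1)) e0.
- rewrite (_ : (fun x => _) = (fun x => (delta (X x) * delta (X x))%:E)); last first.
    by apply/funext => x; rewrite expr2.
  by rewrite (ipE LdX LdX) e1.
- move=> j jk; split; first exact: (L2_mul (LX j) LdX).
  by rewrite (ipE (LX j) LdX) hj.
Qed.

Lemma lcZ (c0 : R) (c : 'I_m -> R) :
  lc m Xj c0 c s = (fun x => c0 + \sum_(j < m | j != k) c j * tnth (X x) j).
Proof. by apply/funext => x; rewrite /lc sumE. Qed.

Lemma mdelta (c0 : R) (c : 'I_m -> R) (B : set (m.-tuple R)) (a : R) :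
  measurable B ->
  measurable_fun [set: m.-tuple R]
    (fun t : m.-tuple R => a * (\1_B t - (c0 + \sum_(i <- s) c i * tnth t i))).
Proof.
move=> mB; apply: measurable_funM; first exact: measurable_cst.
apply: measurable_funB; first exact: measurable_indic.
apply: measurable_funD; first exact: measurable_cst.
apply: measurable_sum => i; apply: measurable_funM; first exact: measurable_cst.
exact: measurable_tnth.
Qed.

Lemma main_aux (Y : T -> R) : L2 Y ->
  (partial_mean_impact P Y X k = 0%E <->
   exists (theta0 : R) (theta : 'I_m -> R),
     is_cond_exp P Y X
       (fun x => theta0 + \sum_(j < m | j != k) theta j * tnth (X x) j)).
Proof.
move=> LY; split.
- move=> hiota.
  have stepA : forall delta, in_Hk P X k delta -> ip Y (fun x => delta (X x)) = 0.
    move=> delta hd.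
    have [mdel LdX e0 e1 hj] := Hk_to delta hd.
    have hex : exists delta, in_Hk P X k delta by exists delta.
    move: hiota; rewrite /partial_mean_impact asboolT // => hsup.
    have LNdX := L2N LdX.
    have hd' : in_Hk P X k (fun t => - delta t).
      apply: Hk_of.
      + exact: measurable_funN.
      + exact: LNdX.
      + by rewrite ipNl ?e0 ?oppr0 //; exact: L2_cst.
      + by rewrite ipNl // ipC ipNl // opprK.
      + by move=> j jk; rewrite ipC ipNl // ipC hj // oppr0.
    have le1 : (\int[P]_x (Y x * delta (X x))%:E <= 0)%E.
      by rewrite -hsup; apply: ereal_sup_ubound; exists delta.
    have le2 : (\int[P]_x (Y x * (fun t => - delta t) (X x))%:E <= 0)%E.
      by rewrite -hsup; apply: ereal_sup_ubound; exists (fun t => - delta t).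
    have E2 := ipE LY LNdX.
    rewrite /= in E2 le2.
    rewrite E2 lee_fin in le2.
    rewrite (ipE LY LdX) lee_fin in le1.
    move: le2; rewrite ipC ipNl // ipC; lra.
  have [t0 [th [HY1 HY2]]] := GS m Xj LX s s_uniq Y LY.
  exists t0, th; rewrite -lcZ.
  have LZ := lc_L2 m Xj LX t0 th s.
  split.
  + move=> B mB.
    exists ((fun t : m.-tuple R => t0 + \sum_(i <- s) th i * tnth t i) @^-1` B).
    split => //.
    rewrite -[X in measurable X]setTI.
    have mf : measurable_fun [set: m.-tuple R]
        (fun t : m.-tuple R => t0 + \sum_(i <- s) th i * tnth t i).
      apply: measurable_funD; first exact: measurable_cst.
      apply: measurable_sum => i; apply: measurable_funM; first exact: measurable_cst.
      exact: measurable_tnth.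
    exact: mf.
  + exact: L2_int.
  + move=> A mA.
    rewrite -(@int_preimage _ _ X Y A) -(@int_preimage _ _ X _ A).
    pose h := fun x => (\1_A (X x) : R).
    have Lh : L2 h.
      split; first by apply: measurableT_comp mX; exact: measurable_indic.
      apply: (@le_integrable _ _ _ _ _ measurableT _ (EFin \o cst 1)).
      * apply/measurable_EFinP; apply: measurable_funX.
        by apply: measurableT_comp mX; exact: measurable_indic.
      * move=> x _ /=; rewrite lee_fin /h indicE normr1.
        by case: (_ \in _); rewrite ?expr1n ?expr0n ?normr1 ?normr0.
      * exact: finite_measure_integrable_cst.
    rewrite (ipE LY Lh) (ipE LZ Lh); congr EFin.
    have [c0 [c [Hh1 Hh2]]] := GS m Xj LX s s_uniq h Lh.
    set rho := (fun x => h x - lc m Xj c0 c s x) in Hh1 Hh2.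
    have Lrho : L2 rho by apply: L2B => //; exact: lc_L2.
    have rhoY : ip Y rho = 0.
      have [rr0|rrn0] := eqVneq (ip rho rho) 0.
        exact: (ip_disc Y rho LY Lrho rr0).
      set sg := Num.sqrt (ip rho rho).
      have sg0 : 0 < sg by rewrite sqrtr_gt0 lt_neqAle eq_sym rrn0 ip_ge0.
      pose delta := fun t : m.-tuple R =>
        sg^-1 * (\1_A t - (c0 + \sum_(i <- s) c i * tnth t i)).
      have edel : (fun x => delta (X x)) = (fun x => sg^-1 * rho x) by [].
      have hd : in_Hk P X k delta.
        apply: Hk_of.
        * exact: mdelta.
        * rewrite edel; exact: L2Z.
        * by rewrite edel ipZl // ?Hh1 ?mulr0 //; exact: L2_cst.
        * rewrite edel ipZl //; last exact: L2Z.
          rewrite ipC ipZl // -[ip rho rho](@sqr_sqrtr _ (ip rho rho)) ?ip_ge0 //.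
          rewrite -/sg; field; exact: lt0r_neq0.
        * by move=> j jk; rewrite edel ipC ipZl // Hh2 ?mulr0 // mem_s.
      have := stepA delta hd; rewrite edel ipC ipZl // ipC => /eqP.
      by rewrite mulf_eq0 invr_eq0 gt_eqF //= => /eqP.
    have Lh2 := lc_L2 m Xj LX c0 c s.
    have eh : h = (fun x => rho x + lc m Xj c0 c s x).
      by apply/funext => x; rewrite /rho subrK.
    rewrite (ipC Y) (ipC (lc m Xj t0 th s)) eh ipDl // ipDl //.
    rewrite ipC rhoY add0r (ip_lc m Xj LX rho t0 th s Lrho Hh1 Hh2) add0r.
    have := ip_lc m Xj LX (fun x => Y x - lc m Xj t0 th s x) c0 c s
      (L2B LY LZ) HY1 HY2.
    rewrite ipBl // ipC (ipC _ (lc m Xj c0 c s)).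
    by move=> /eqP; rewrite subr_eq0 => /eqP.
- move=> [t0 [th hce]].
  rewrite -lcZ in hce.
  have LZ := lc_L2 m Xj LX t0 th s.
  case: hce => _ _ hA.
  have key : forall delta, in_Hk P X k delta ->
      (\int[P]_x (Y x * delta (X x))%:E = 0)%E.
    move=> delta hd; have [mdel LdX e0 e1 hj] := Hk_to delta hd.
    rewrite (ipE LY LdX); congr EFin.
    have eY : Y = (fun x => (Y x - lc m Xj t0 th s x) + lc m Xj t0 th s x).
      by apply/funext => x; rewrite subrK.
    have LW : L2 (fun x => Y x - lc m Xj t0 th s x) by exact: L2B.
    rewrite eY ipDl //.
    rewrite (ipC (lc m Xj t0 th s)) (ip_lc m Xj LX) // ?addr0; last first.
      by move=> i; rewrite mem_s ipC; exact: hj.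
    apply: (@tower _ _ X mX _ delta) => // B mB.
    have mD : measurable (X @^-1` B) by rewrite -[X in measurable X]setTI; exact: mX.
    have i1 : P.-integrable (X @^-1` B) (fun x => (Y x)%:E).
      by apply: (integrableS measurableT mD (subsetT _)); exact: L2_int.
    have i2 : P.-integrable (X @^-1` B) (fun x => (lc m Xj t0 th s x)%:E).
      by apply: (integrableS measurableT mD (subsetT _)); exact: L2_int.
    under eq_integral do rewrite EFinB.
    by rewrite integralB // hA // subee // integrable_fin_num.
  rewrite /partial_mean_impact; case: asboolP => // hex.
  rewrite (_ : [set _ | _ in _] = [set 0%E]) ?ereal_sup1 //.
  apply/seteqP; split => [_ [delta hd <-]|_ ->]; first by rewrite /= key.
  by have [delta hd] := hex; exists delta => //; exact: key.
Qed.

End main.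

End L2.

Theorem theorem2 (R : realType) (d : measure_display) (T : measurableType d)
  (P : probability T R) (m : nat) (Y : T -> R) (X : T -> m.-tuple R)
  (k : 'I_m) :
  measurable_fun [set: T] Y ->
  P.-integrable [set: T] (fun x => (Y x ^+ 2)%:E) ->
  measurable_fun [set: T] X ->
  (forall j : 'I_m, P.-integrable [set: T] (fun x => (tnth (X x) j ^+ 2)%:E)) ->
  (partial_mean_impact P Y X k = 0%E <->
   exists (theta0 : R) (theta : 'I_m -> R),
     is_cond_exp P Y X
       (fun x => theta0 + \sum_(j < m | j != k) theta j * tnth (X x) j)).
Proof.
move=> mY IY mX IX.
have LX : forall j : 'I_m, @L2 R d T P (fun x => tnth (X x) j).
  move=> j; split => //.
  exact: (measurableT_comp (measurable_tnth j) mX).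
exact: (@main_aux R d T P m X k mX LX Y (conj mY IY)).
Qed.
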